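(* Let $\Delta$ be a balanced, non-degenerate, even multiset in $\mathbb{Z}^2\setminus\{(0,0)\}$ and let $\rho>0$ be such that, for each side $\sigma$ of $P_\Delta$, the complement in $\operatorname{Tor}^+_{\mathbb{R}}(\sigma)$ of the $\rho$-neighborhoods of its endpoints is non-empty. Then the metric closure $\overline{\operatorname{Men}}{}^\rho_{\mathbb{R}}(\Delta)$ of $\operatorname{Men}^\rho_{\mathbb{R}}(\Delta)$ in $\prod_{\sigma\in P^1_\Delta}(\operatorname{Tor}^+_{\mathbb{R}}(\sigma))^{n^\sigma}$ is diffeomorphic to a convex polytope.
   Context: Notation: $\Delta$ balanced (elements sum to $0$), non-degenerate (elements span $\mathbb{R}^2$), even ($\Delta\subset(2\mathbb{Z})^2$). $P_\Delta$ is the convex lattice polygon whose counterclockwise oriented boundary is obtained by concatenating the vectors of $\Delta$ rotated counterclockwise by $\pi/2$; $P^1_\Delta$ its set of sides; for $\sigma\in P^1_\Delta$, $\boldsymbol a^\sigma_1,\dots,\boldsymbol a^\sigma_{n^\sigma}$ are the elements of $\Delta$ that are outer normals to $\sigma$, with lattice lengths $2k^\sigma_i$. $\operatorname{Tor}(P_\Delta)$ is the complex toric surface with its tautological real structure; its closed positive quadrant $\operatorname{Tor}^+_{\mathbb{R}}(P_\Delta)$ (closure of $(\mathbb{R}_{>0})^2$) is identified with $P_\Delta$ by the moment map, and it carries the metric pulled back from $P_\Delta\subset\mathbb{R}^2$. For a side $\sigma$, $\operatorname{Tor}(\sigma)$ is its toric divisor, $\operatorname{Tor}(\sigma)^\times$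 the dense orbit, and $\operatorname{Tor}^+_{\mathbb{R}}(\sigma)=\operatorname{Tor}(\sigma)\cap\partial\operatorname{Tor}^+_{\mathbb{R}}(P_\Delta)$ (a closed segment). Fix a linear functional $\lambda:\mathbb{R}^2\to\mathbb{R}$ injective on $\mathbb{Z}^2$; its maximum and minimum points on $P_\Delta$ split $\partial P_\Delta$ into two broken lines $B',B''$, and orient each side from its $\lambda$-minimal to its $\lambda$-maximal point. An automorphism of $\mathbb{Z}^2$ sending an oriented side $\sigma$ onto the segment $[0,\|\sigma\|_{\mathbb{Z}}]$ of the first axis identifies $\operatorname{Tor}(\sigma)^\times$ with $\mathbb{C}^\times$, taking the positive real half-axis of $\operatorname{Tor}(\sigma)^\times$ (the interior of $\operatorname{Tor}^+_{\mathbb{R}}(\sigma)$) onto $\mathbb{R}_{>0}$; let $\xi^\sigma_i$ be the resulting coordinate of a point $z^\sigma_i\in\operatorname{Tor}(\sigma)^\times$. Let $k_0=\gcd\{k^\sigma_i\}$. $\operatorname{Men}(\Delta)_{red}$ is the set of sequences $(z^\sigma_i)$, $z^\sigma_i\in\operatorname{Tor}(\sigma)^\times$, with $\prod_{\sigma\subset B'}\prod_i(\xi^\sigma_i)^{k^\sigma_i/k_0}=\prod_{\sigma\subset B''}\prod_i(\xi^\sigma_i)^{k^\sigma_i/k_0}$. $\operatorname{Men}^\rho_{\mathbb{R}}(\Delta)$ is the set of sequences in $\operatorname{Men}(\Delta)_{red}$ such that every point $z^\sigma_i$ lies in $\operatorname{Tor}^+_{\mathbb{R}}(\sigma)$ at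 distance $\ge\rho$ from the endpoints of $\operatorname{Tor}^+_{\mathbb{R}}(\sigma)$. *)

(* Defs.v *)
From HB Require Import structures.
From mathcomp Require Import all_boot all_order all_algebra.
From mathcomp Require Import all_classical all_reals all_analysis.

Set Implicit Arguments.
Unset Strict Implicit.
Unset Printing Implicit Defensive.

Import Order.TTheory GRing.Theory Num.Theory.
Import numFieldNormedType.Exports.
Local Open Scope ring_scope.
Local Open Scope classical_set_scope.

Fixpoint iter_dir (R : realType) (n m : nat) (vs : seq 'rV[R]_n)
    (f : 'rV[R]_n -> 'rV[R]_m) : 'rV[R]_n -> 'rV[R]_m :=
  match vs with
  | [::] => f
  | v :: vs' => fun x => 'D_v (iter_dir vs' f) x
  end.

Definition smooth_on (R : realType) (n m : nat) (U : set 'rV[R]_n)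
    (f : 'rV[R]_n -> 'rV[R]_m) : Prop :=
  open U /\
  forall (vs : seq 'rV[R]_n) (x : 'rV[R]_n), U x ->
    {for x, continuous (iter_dir vs f)} /\
    forall v : 'rV[R]_n, derivable (iter_dir vs f) x v.

(* smoothness of a map defined on an arbitrary subset M (Milnor / Guillemin-Pollack):
   locally it extends to a C^oo map on an open neighbourhood *)
Definition smooth_on_subset (R : realType) (n m : nat) (M : set 'rV[R]_n)
    (f : 'rV[R]_n -> 'rV[R]_m) : Prop :=
  forall x, M x -> exists (U : set 'rV[R]_n) (F : 'rV[R]_n -> 'rV[R]_m),
    U x /\ smooth_on U F /\ forall y, M y -> U y -> F y = f y.

Definition diffeomorphic (R : realType) (n m : nat) (M : set 'rV[R]_n)
    (Q : set 'rV[R]_m) : Prop :=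
  exists (f : 'rV[R]_n -> 'rV[R]_m) (g : 'rV[R]_m -> 'rV[R]_n),
    [/\ forall x, M x -> Q (f x),
        forall y, Q y -> M (g y),
        forall x, M x -> g (f x) = x,
        forall y, Q y -> f (g y) = y &
        smooth_on_subset M f /\ smooth_on_subset Q g].

Definition convex_polytope (R : realType) (m : nat) (Q : set 'rV[R]_m) : Prop :=
  exists vs : seq 'rV[R]_m,
    Q = [set x | exists w : 'I_(size vs) -> R,
           [/\ forall i, 0 <= w i, \sum_i w i = 1 &
               x = \sum_i w i *: vs`_(val i)]].

(* Delta is given as a family a : 'I_n -> Z^2 (repetitions allowed) *)
Definition zvec := (int * int)%type.

Definition latlen (v : zvec) : nat := gcdn `|v.1|%N `|v.2|%N.

Definition zdet (u v : zvec) : int := u.1 * v.2 - u.2 * v.1.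
Definition zdot (u v : zvec) : int := u.1 * v.1 + u.2 * v.2.

(* u and v point in the same direction, i.e. are outer normals of the same side *)
Definition same_dir (u v : zvec) : bool := (zdet u v == 0) && (0 < zdot u v).

Definition balanced_family (n : nat) (a : 'I_n -> zvec) : Prop :=
  \sum_i (a i).1 = 0 /\ \sum_i (a i).2 = 0.

Definition nondegenerate_family (n : nat) (a : 'I_n -> zvec) : Prop :=
  exists i j, zdet (a i) (a j) != 0.

Definition even_family (n : nat) (a : 'I_n -> zvec) : Prop :=
  forall i, (2 %| (a i).1)%Z /\ (2 %| (a i).2)%Z.

(* k_j : the element a j of Delta has lattice length 2 k_j *)
Definition kk (n : nat) (a : 'I_n -> zvec) (j : 'I_n) : nat := (latlen (a j)) %/ 2.

Definition k0 (n : nat) (a : 'I_n -> zvec) : nat := \big[gcdn/0%N]_(j < n) kk a j.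

(* lattice length of the side sigma of P_Delta having a j as outer normal *)
Definition side_latlen (n : nat) (a : 'I_n -> zvec) (j : 'I_n) : nat :=
  \sum_(i | same_dir (a i) (a j)) latlen (a i).

(* euclidean length of that side *)
Definition side_len (R : realType) (n : nat) (a : 'I_n -> zvec) (j : 'I_n) : R :=
  \sum_(i | same_dir (a i) (a j))
     Num.sqrt (((a i).1 ^+ 2 + (a i).2 ^+ 2)%:~R).

Definition lam (R : realType) (l1 l2 : R) (v : zvec) : R :=
  l1 * (v.1)%:~R + l2 * (v.2)%:~R.

Definition rot90 (v : zvec) : zvec := (- v.2, v.1).

(* the side with outer normal a j lies on the broken line B' iff lambda increases
   along its counterclockwise orientation (the other sides form B'') *)
Definition in_B' (R : realType) (l1 l2 : R) (n : nat) (a : 'I_n -> zvec)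
   (j : 'I_n) : bool := 0 < lam l1 l2 (rot90 (a j)).

(* moment map of the toric curve of the segment [0,L] on the positive half-axis,
   in lattice units:  xi |-> (sum_j j xi^j) / (sum_j xi^j) *)
Definition mom (R : realType) (L : nat) (xi : R) : R :=
  (\sum_(j < L.+1) (j%:R * xi ^+ j)) / (\sum_(j < L.+1) xi ^+ j).

(* euclidean distance, from the lambda-minimal endpoint of the side of a j, of the
   point of Tor^+_R(sigma) with coordinate xi > 0 *)
Definition pos_on_side (R : realType) (n : nat) (a : 'I_n -> zvec) (j : 'I_n)
   (xi : R) : R :=
  side_len R a j / (side_latlen a j)%:R * mom (side_latlen a j) xi.

(* Men^rho_R(Delta), as a subset of prod_j [0, |sigma_j|] in R^n: coordinate j is
   the distance of the point z_j from the lambda-minimal endpoint of its side *)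
Definition Men_rho (R : realType) (l1 l2 : R) (n : nat) (a : 'I_n -> zvec)
   (rho : R) : set 'rV[R]_n :=
  [set t | exists xi : 'I_n -> R,
     [/\ forall j, 0 < xi j,
         \prod_(j | in_B' l1 l2 a j) xi j ^+ (kk a j %/ k0 a)
           = \prod_(j | ~~ in_B' l1 l2 a j) xi j ^+ (kk a j %/ k0 a),
         forall j, t ord0 j = pos_on_side a j (xi j) &
         forall j, rho <= t ord0 j /\ rho <= side_len R a j - t ord0 j]].

(* Main.v *)
Require Import Defs.
From HB Require Import structures.
From mathcomp Require Import all_boot all_order all_algebra.
From mathcomp Require Import all_classical all_reals all_analysis.
From mathcomp Require Import ring lra.
Import Order.TTheory GRing.Theory Num.Theory.
Import numFieldNormedType.Exports.
Local Open Scope ring_scope.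
Local Open Scope classical_set_scope.
Set Implicit Arguments.
Unset Strict Implicit.
Unset Printing Implicit Defensive.
Section Ck.
Context {R : realType}.

Fixpoint Ck (k : nat) (I : set R) (f : R -> R) : Prop :=
  match k with
  | 0 => forall x, I x -> {for x, continuous f}
  | k.+1 => (forall x, I x -> derivable f x 1) /\ Ck k I f^`()
  end.

Lemma Ck_cont k I f : Ck k I f -> forall x, I x -> {for x, continuous f}.
Proof.
case: k => [//|k] [df _] x Ix.
by apply/differentiable_continuous/derivable1_diffP/df.
Qed.

Lemma Ck_le k I f : Ck k.+1 I f -> Ck k I f.
Proof.
elim: k f => [|k IH] f; first by move=> H; apply: Ck_cont H.
by move=> [df H]; split => //; apply: IH.
Qed.

Lemma Ck_ext k I f g : open I -> (forall x, I x -> f x = g x) ->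
  Ck k I f -> Ck k I g.
Proof.
move=> oI; elim: k f g => [|k IH] f g fg.
  move=> cf x Ix; have nfg : \forall y \near x, f y = g y.
    by apply: filterS (oI x Ix) => y /fg.
  rewrite /prop_for /continuous_at -(fg x Ix).
  apply: cvg_trans (cf x Ix); apply: near_eq_cvg.
  by apply: filterS nfg => y ->.
have nfg : forall x, I x -> \forall y \near x, f y = g y.
  by move=> x Ix; apply: filterS (oI x Ix) => y /fg.
move=> [df H]; split.
  by move=> x Ix; apply: near_eq_derivable (df x Ix); apply: nfg.
apply: IH H => x Ix; rewrite !derive1E; apply: near_eq_derive.
exact: nfg.
Qed.

Lemma Ck_cst k I (c : R) : Ck k I (fun=> c).
Proof.
elim: k => [|k IH] /=; first by move=> x _; apply: cvg_cst.
split; first by move=> x _; exact: derivable_cst.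
have -> : (fun=> c : R)^`() = fun=> 0.
  by apply/funext => x; rewrite derive1E derive_cst.
elim: k {IH} => [|k IH]; first by move=> x _; apply: cvg_cst.
split; first by move=> x _; exact: derivable_cst.
have -> : (fun=> 0 : R)^`() = fun=> 0.
  by apply/funext => x; rewrite derive1E derive_cst.
exact: IH.
Qed.

Lemma Ck_id k I : Ck k I id.
Proof.
case: k => [|k] /=; first by move=> x _; exact: cvg_id.
split; first by move=> x _; exact: derivable_id.
have -> : (@id R)^`() = fun=> 1.
  by apply/funext => x; rewrite derive1E derive_id.
exact: Ck_cst.
Qed.

Lemma Ck_add k I f g : open I -> Ck k I f -> Ck k I g -> Ck k I (fun x => f x + g x).
Proof.
move=> oI; elim: k f g => [|k IH] f g.
  by move=> cf cg x Ix; apply: continuousD; [exact: cf| exact: cg].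
move=> [df Hf] [dg Hg]; split.
  by move=> x Ix; apply: derivableD; [exact: df|exact: dg].
apply: (Ck_ext oI _ (IH _ _ Hf Hg)) => x Ix.
rewrite !derive1E.
have -> : (fun x => f x + g x) = f + g by [].
by rewrite deriveD //; [exact: df|exact: dg].
Qed.

Lemma Ck_mul k I f g : open I -> Ck k I f -> Ck k I g -> Ck k I (fun x => f x * g x).
Proof.
move=> oI; elim: k f g => [|k IH] f g.
  by move=> cf cg x Ix; apply: continuousM; [exact: cf| exact: cg].
move=> Cf Cg; have Cf' := Ck_le Cf; have Cg' := Ck_le Cg.
move: Cf Cg => [df Hf] [dg Hg]; split.
  by move=> x Ix; apply: derivableM; [exact: df|exact: dg].
have := Ck_add oI (IH _ _ Cf' Hg) (IH _ _ Hf Cg').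
apply: Ck_ext => // x Ix.
rewrite !derive1E.
have -> : (fun x => f x * g x) = f * g by [].
rewrite deriveM //; [|exact: df|exact: dg].
by rewrite /= [X in _ + X]mulrC.
Qed.

End Ck.
Section Ck2.
Context {R : realType}.

Lemma Ck_opp k (I : set R) f : open I -> Ck k I f -> Ck k I (fun x => - f x).
Proof.
move=> oI Cf; have := Ck_mul oI (Ck_cst k I (-1)) Cf.
by apply: Ck_ext => // x _; rewrite mulN1r.
Qed.

Lemma Ck_inv k (I : set R) f : open I -> (forall x, I x -> f x != 0) ->
  Ck k I f -> Ck k I (fun x => (f x)^-1).
Proof.
move=> oI f0; elim: k f f0 => [|k IH] f f0.
  move=> cf x Ix; apply: continuousV; [exact: f0|exact: cf].
move=> Cf; have Cf' := Ck_le Cf; move: Cf => [df Hf]; split.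
  by move=> x Ix; apply: derivableV; [exact: f0|exact: df].
have Hi := IH _ f0 Cf'.
have := Ck_opp oI (Ck_mul oI Hf (Ck_mul oI Hi Hi)).
apply: Ck_ext => // x Ix; rewrite !derive1E.
rewrite deriveV; [|exact: f0|exact: df].
by rewrite /GRing.scale /= mulNr -invfM -expr2 mulrC.
Qed.

Lemma Ck_comp k (I J : set R) f g : open I -> open J -> (forall x, I x -> J (g x)) ->
  Ck k J f -> Ck k I g -> Ck k I (fun x => f (g x)).
Proof.
move=> oI oJ gIJ; elim: k f g gIJ => [|k IH] f g gIJ.
  move=> cf cg x Ix; apply: continuous_comp; [exact: cg|exact: cf (gIJ _ Ix)].
move=> Cf Cg; have Cf' := Ck_le Cf; have Cg' := Ck_le Cg.
move: Cf Cg => [df Hf] [dg Hg]; split.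
  move=> x Ix; apply/derivable1_diffP/differentiable_comp.
    exact/derivable1_diffP/dg.
  exact/derivable1_diffP/df/gIJ.
have := Ck_mul oI (IH _ _ gIJ Hf Cg') Hg.
apply: Ck_ext => // x Ix.
have -> : (fun x => f (g x)) = f \o g by [].
by rewrite [RHS]derive1_comp //; [exact: dg|exact: df (gIJ _ Ix)].
Qed.

Lemma Ck_exp k (I : set R) : Ck k I expR.
Proof.
have E : (@expR R)^`() = expR.
  by apply/funext => x; rewrite derive1E; have [_ ->] := is_derive_expR x.
elim: k => [|k IH] /=; first by move=> x _; exact: continuous_expR.
by split; [move=> x _; exact: derivable_expR|rewrite E].
Qed.

Lemma Ck_sum k (I : set R) n (F : 'I_n -> R -> R) : open I ->
  (forall i, Ck k I (F i)) -> Ck k I (fun x => \sum_(i < n) F i x).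
Proof.
move=> oI; elim: n F => [|n IH] F CF.
  by have := Ck_cst k I 0; apply: Ck_ext => // x _; rewrite big_ord0.
have := Ck_add oI (IH (fun i => F (widen_ord (leqnSn n) i)) (fun i => CF _)) (CF ord_max).
by apply: Ck_ext => // x _; rewrite big_ord_recr.
Qed.

Lemma Ck_pow k (I : set R) f m : open I -> Ck k I f -> Ck k I (fun x => f x ^+ m).
Proof.
move=> oI Cf; elim: m => [|m IH].
  by have := Ck_cst k I 1; apply: Ck_ext.
by have := Ck_mul oI Cf IH; apply: Ck_ext => // x _; rewrite exprS.
Qed.

Lemma Ck_dern m k (I : set R) f : Ck (k + m) I f -> Ck m I (f^`(k)).
Proof.
elim: k f => [|k IH] f; first by rewrite add0n derive1n0.
by rewrite addSn => -[_ H]; rewrite derive1Sn; apply: IH.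
Qed.

Definition smooth1 (I : set R) f := forall k, Ck k I f.

Lemma Ck_inverse (E G : R -> R) (J : set R) :
  open J -> smooth1 setT E -> (forall x, E^`()%classic x != 0) ->
  (forall u, G (E u) = u) -> (forall y, J y -> E (G y) = y) ->
  smooth1 J G.
Proof.
move=> oJ sE E'0 GE EG.
have dG : forall y, J y -> is_derive y 1 G (E^`()%classic (G y))^-1.
  move=> y Jy; rewrite -{1}(EG y Jy).
  apply: is_derive_inverse.
  - by near=> z; rewrite GE.
  - by near=> z; apply: (Ck_cont (sE 0%N)).
  - have [dE _] := sE 1%N; have := dE (G y) I.
    by move=> /derivableP; rewrite -derive1E.
  - exact: E'0.
have sE' : smooth1 setT E^`()%classic by move=> k; have [_ ] := sE k.+1.
move=> k; elim: k => [|k IH].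
  move=> y Jy; apply/differentiable_continuous/derivable1_diffP.
  by have [] := dG y Jy.
split; first by move=> y Jy; have [] := dG y Jy.
have := Ck_inv oJ (fun x _ => E'0 (G x)) (Ck_comp oJ openT (fun _ _ => I) (sE' k) IH).
apply: Ck_ext => // y Jy.
by have [_ <-] := dG y Jy; rewrite derive1E.
Unshelve. all: by end_near.
Qed.

End Ck2.
Section Der1.
Context {R : realType}.

Lemma lin_der (c u : R) : derivable (fun u => c * u) u 1 /\ (fun u => c * u)^`()%classic u = c.
Proof.
have H := @is_deriveZ R R R id c u 1 1 (is_derive_id _ _).
have -> : (fun u => c * u) = c \*: id by apply/funext => x.
case: H => d e; split => //; by rewrite derive1E e /GRing.scale /= mulr1.
Qed.

Lemma pe_der (c u : R) : derivable (fun u => expR (c * u)) u 1 /\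
   (fun u => expR (c * u))^`()%classic u = c * expR (c * u).
Proof.
have [d1 e1] := lin_der c u.
have -> : (fun u => expR (c * u)) = expR \o (fun u => c * u) by [].
split.
  apply/derivable1_diffP/differentiable_comp; first exact/derivable1_diffP.
  exact/derivable1_diffP/derivable_expR.
rewrite derive1_comp //.
rewrite e1 derive1E; have [_ ->] := is_derive_expR (c * u).
by rewrite mulrC.
Qed.

Lemma scal_der (c u : R) f d : derivable f u 1 /\ f^`()%classic u = d ->
  derivable (fun u => c * f u) u 1 /\ (fun u => c * f u)^`()%classic u = c * d.
Proof.
move=> [df e]; have -> : (fun u => c * f u) = c \*: f by apply/funext => x.
split; first exact: derivableZ.
by rewrite derive1E deriveZ // -derive1E e.
Qed.

Lemma sum_der m (F : 'I_m -> R -> R) (dF : 'I_m -> R) u :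
  (forall j, derivable (F j) u 1 /\ (F j)^`()%classic u = dF j) ->
  derivable (fun u => \sum_(j < m) F j u) u 1 /\
  (fun u => \sum_(j < m) F j u)^`()%classic u = \sum_(j < m) dF j.
Proof.
move=> H; rewrite -fct_sumE; split.
  by apply: derivable_sum => j; case: (H j).
rewrite derive1E derive_sum; last by move=> j; case: (H j).
by apply: eq_bigr => j _; case: (H j) => _ <-; rewrite derive1E.
Qed.

Lemma le_sum_term n (F : 'I_n -> R) i : (forall j, 0 <= F j) -> F i <= \sum_j F j.
Proof.
move=> F0; rewrite (bigD1 i) //=; apply: ler_wpDr => //.
by apply: sumr_ge0 => j _; apply: F0.
Qed.

End Der1.

Section Mom.
Context {R : realType} (L : nat).

Definition pe (j : nat) (u : R) := expR (j%:R * u).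
Definition Dn u := \sum_(j < L.+1) pe j u.
Definition Nn u := \sum_(j < L.+1) j%:R * pe j u.
Definition N2 u := \sum_(j < L.+1) j%:R * (j%:R * pe j u).
Definition Ef (u : R) := mom L (expR u).

Lemma EfE u : Ef u = Nn u / Dn u.
Proof.
rewrite /Ef /mom /Nn /Dn /pe; congr (_ / _); apply: eq_bigr => j _;
  by rewrite expRM_natl.
Qed.

Lemma pe_gt0 j u : 0 < pe j u. Proof. exact: expR_gt0. Qed.

Lemma Dn_gt0 u : 0 < Dn u.
Proof.
apply: lt_le_trans (pe_gt0 0 u) _.
exact: (@le_sum_term _ _ (fun j : 'I_L.+1 => pe j u) ord0 (fun j => ltW (pe_gt0 _ _))).
Qed.

Lemma Dn_der u : derivable Dn u 1 /\ Dn^`()%classic u = Nn u.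
Proof. by apply: sum_der => j; apply: pe_der. Qed.

Lemma Nn_der u : derivable Nn u 1 /\ Nn^`()%classic u = N2 u.
Proof. by apply: sum_der => j; apply: scal_der; apply: pe_der. Qed.

Lemma Ef_der u : derivable Ef u 1 /\
  Ef^`()%classic u = (N2 u * Dn u - Nn u * Nn u) / (Dn u ^+ 2).
Proof.
have -> : Ef = (fun u => Nn u * (Dn u)^-1) by apply/funext => x; rewrite EfE.
have [dN eN] := Nn_der u; have [dD eD] := Dn_der u.
have D0 : Dn u != 0 by rewrite gt_eqF // Dn_gt0.
have dV : derivable (fun u => (Dn u)^-1) u 1 by apply: derivableV.
have -> : (fun u => Nn u * (Dn u)^-1) = Nn * (fun u => (Dn u)^-1) by [].
split; first exact: derivableM.
rewrite derive1E deriveM // deriveV // -!derive1E eN eD /GRing.scale /=.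
field; exact: D0.
Qed.

Lemma Ef_smooth : smooth1 setT Ef.
Proof.
move=> k.
have Cpe : forall j, Ck k setT (pe j).
  move=> j; apply: (Ck_comp openT openT (fun _ _ => I) (Ck_exp k _)).
  exact: Ck_mul openT (Ck_cst _ _ _) (Ck_id _ _).
have CN : Ck k setT Nn.
  by apply: Ck_sum openT _ => j; apply: Ck_mul openT (Ck_cst _ _ _) (Cpe j).
have CD : Ck k setT Dn by apply: Ck_sum openT _ => j; apply: Cpe.
have := Ck_mul openT CN (Ck_inv openT (fun x _ => lt0r_neq0 (Dn_gt0 x)) CD).
by apply: Ck_ext openT _ => x _; rewrite EfE.
Qed.

End Mom.
Section Mom2.
Context {R : realType} (L : nat) (L0 : (0 < L)%N).

Local Notation pe := (@pe R).
Local Notation Dn := (@Dn R L).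
Local Notation Nn := (@Nn R L).
Local Notation N2 := (@N2 R L).
Local Notation Ef := (@Ef R L).

Lemma var_pos u : 0 < N2 u * Dn u - Nn u * Nn u.
Proof.
pose p (j : 'I_L.+1) := pe j u.
pose T (j k : 'I_L.+1) := (j%:R - k%:R) ^+ 2 * (p j * p k) : R.
pose A (j k : 'I_L.+1) := j%:R * (j%:R * p j) * p k : R.
pose B (j k : 'I_L.+1) := j%:R * p j * (k%:R * p k) : R.
have e1 : N2 u * Dn u = \sum_j \sum_k A j k.
  rewrite /N2 /Dn mulr_suml; apply: eq_bigr => j _.
  by rewrite mulr_sumr.
have e2 : Nn u * Nn u = \sum_j \sum_k B j k.
  rewrite /Nn mulr_suml; apply: eq_bigr => j _.
  by rewrite mulr_sumr.
have eT : \sum_j \sum_k T j k = \sum_j \sum_k A j k + \sum_j \sum_k A j k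
    - 2 * \sum_j \sum_k B j k.
  have -> : \sum_j \sum_k T j k =
      \sum_j \sum_k (A j k + A k j - 2 * B j k).
    apply: eq_bigr => j _; apply: eq_bigr => k _; rewrite /T /A /B; ring.
  rewrite [X in _ = X + _ - _](exchange_big) /= -big_split /= mulr_sumr -sumrB.
  apply: eq_bigr => j _; rewrite mulr_sumr -big_split -sumrB /=.
  by apply: eq_bigr => k _; congr (_ - _); rewrite addrC.
have T0 : forall j k, 0 <= T j k.
  by move=> j k; rewrite /T mulr_ge0 // ?sqr_ge0 // mulr_ge0 // ltW // /p pe_gt0.
have Tpos : 0 < \sum_j \sum_k T j k.
  have i1 : (1 < L.+1)%N by [].
  apply: (@lt_le_trans _ _ (T (Ordinal i1) ord0)).
    by rewrite /T /= subr0 expr1n mul1r mulr_gt0 // /p pe_gt0.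
  have h1 := @le_sum_term _ _ (fun k => T (Ordinal i1) k) ord0 (T0 _).
  have h2 := @le_sum_term _ _ (fun j => \sum_k T j k) (Ordinal i1)
     (fun j => sumr_ge0 _ (fun k _ => T0 j k)).
  exact: le_trans h1 h2.
rewrite e1 e2; move: Tpos; rewrite eT; lra.
Qed.

Lemma Ef'_gt0 u : 0 < Ef^`()%classic u.
Proof.
have [_ ->] := Ef_der L u; apply: divr_gt0; first exact: var_pos.
by apply: exprn_gt0; apply: Dn_gt0.
Qed.

Lemma Ef_incr : {homo Ef : x y / x < y}.
Proof.
move=> x y xy; apply: (@gtr0_derive1_incr _ _ x y) => //.
- by move=> z _; have [] := Ef_der L z.
- by move=> z _; apply: Ef'_gt0.
- apply: continuous_subspaceT => z; exact: (Ck_cont (Ef_smooth L 0%N)).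
Qed.

Lemma Ef_mono : {mono Ef : x y / x <= y}.
Proof. exact: le_mono Ef_incr. Qed.

Lemma Ef_inj : injective Ef.
Proof. by move=> x y /eqP; rewrite eq_le !Ef_mono -eq_le => /eqP. Qed.

Lemma Dn_ge1 u : 1 <= Dn u.
Proof.
have := @le_sum_term _ _ (fun j : 'I_L.+1 => pe j u) ord0 (fun j => ltW (pe_gt0 _ _)).
by rewrite /= /pe mul0r expR0.
Qed.

Lemma Dn_gepL u : pe L u <= Dn u.
Proof. exact: (@le_sum_term _ _ (fun j : 'I_L.+1 => pe j u) ord_max (fun j => ltW (pe_gt0 _ _))). Qed.

Lemma Ef_low y : 0 < y -> exists u, Ef u < y.
Proof.
move=> y0; pose c : R := (L.+1 * L)%:R.
have c0 : 0 < c by rewrite ltr0n muln_gt0.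
pose u := Num.min 0 (ln (y / (2 * c))).
have eu : expR u <= y / (2 * c).
  rewrite -[X in _ <= X]lnK; last by rewrite posrE divr_gt0 // mulr_gt0.
  by rewrite ler_expR ge_min lexx orbT.
have u0 : u <= 0 by rewrite ge_min lexx.
exists u; rewrite EfE.
have N0 : 0 <= Nn u.
  by apply: sumr_ge0 => j _; apply: mulr_ge0 => //; apply/ltW/pe_gt0.
have h1 : Nn u / Dn u <= Nn u.
  rewrite ler_pdivrMr ?Dn_gt0 //; apply: ler_peMr => //; exact: Dn_ge1.
have h2 : Nn u <= c * expR u.
  have -> : c * expR u = \sum_(j < L.+1) L%:R * expR u.
    by rewrite sumr_const card_ord -[in RHS]mulr_natl /c natrM; ring.
  apply: ler_sum => j _.
  have [j0|j0] := eqVneq (j : nat) 0%N.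
    by rewrite j0 mul0r mulr_ge0 // ltW // expR_gt0.
  apply: ler_pM => //; first by apply/ltW/pe_gt0.
    by rewrite ler_nat -ltnS.
  rewrite /pe ler_expR -[X in _ <= X]mul1r ler_wnM2r // ler1n lt0n j0 //.
have h3 : c * expR u <= y / 2.
  rewrite -(ler_pM2l c0) in eu; apply: le_trans eu _.
  rewrite le_eqVlt; apply/orP; left; apply/eqP; field.
  by apply/andP; split; apply: lt0r_neq0; [rewrite ltr0n|rewrite ltr_wpDr ?ler0n ?ltr01].
lra.
Qed.

Lemma Ef_up y : y < L%:R -> exists u, y < Ef u.
Proof.
move=> yL; pose z := L%:R - y; have z0 : 0 < z by rewrite /z subr_gt0.
pose c : R := (L.+1 * L)%:R.
have c0 : 0 < c by rewrite ltr0n muln_gt0.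
pose u := Num.max 0 (- ln (z / (2 * c))).
have eu : expR (- u) <= z / (2 * c).
  rewrite -[X in _ <= X]lnK; last by rewrite posrE divr_gt0 // mulr_gt0.
  by rewrite ler_expR lerNl le_max lexx orbT.
have u0 : 0 <= u by rewrite le_max lexx.
exists u.
have eL : L%:R - Ef u = (\sum_(j < L.+1) (L%:R - j%:R) * pe j u) / Dn u.
  rewrite EfE; apply: (@mulIf _ (Dn u)); first by rewrite gt_eqF // Dn_gt0.
  rewrite mulrBl divfK ?gt_eqF ?Dn_gt0 // /Dn /Nn mulr_sumr -sumrB.
  rewrite divfK ?lt0r_neq0 ?Dn_gt0 //.
  by apply: eq_bigr => j _; rewrite mulrBl.
have h1 : \sum_(j < L.+1) (L%:R - j%:R) * pe j u <= c * expR (- u) * pe L u.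
  have -> : c * expR (- u) * pe L u = \sum_(j < L.+1) L%:R * (expR (- u) * pe L u).
    by rewrite sumr_const card_ord -[in RHS]mulr_natl /c natrM; ring.
  apply: ler_sum => j _.
  have [jL|jL] := eqVneq (j : nat) L.
    by rewrite jL subrr mul0r mulr_ge0 // mulr_ge0 // ltW // ?expR_gt0 ?pe_gt0.
  have jL' : (j <= L.-1)%N by rewrite -ltnS prednK // ltn_neqAle jL -ltnS ltn_ord.
  apply: ler_pM => //.
  - by rewrite subr_ge0 ler_nat -ltnS.
  - by apply/ltW/pe_gt0.
  - by rewrite lerBlDr lerDl.
  rewrite /pe -expRD ler_expR.
  have -> : - u + L%:R * u = L.-1%:R * u.
    by rewrite -{1}(prednK L0) -addn1 natrD mulrDl mul1r addrC addrK.
  by apply: ler_wpM2r => //; rewrite ler_nat.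
have h2 : L%:R - Ef u <= c * expR (- u).
  rewrite eL ler_pdivrMr ?Dn_gt0 //; apply: le_trans h1 _.
  apply: ler_wpM2l; first by rewrite mulr_ge0 // ltW // expR_gt0.
  exact: Dn_gepL.
have h3 : c * expR (- u) <= z / 2.
  rewrite -(ler_pM2l c0) in eu; apply: le_trans eu _.
  rewrite le_eqVlt; apply/orP; left; apply/eqP; field.
  by apply/andP; split; apply: lt0r_neq0; [rewrite ltr0n|rewrite ltr_wpDr ?ler0n ?ltr01].
rewrite /z in h3; lra.
Qed.

Definition Ginv (y : R) : R := xget 0 [set u | Ef u = y].

Lemma GinvK u : Ginv (Ef u) = u.
Proof.
apply: Ef_inj; rewrite /Ginv.
by have := @xgetPex _ 0 [set v | Ef v = Ef u] (ex_intro _ u erefl).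
Qed.

Lemma EfK y : 0 < y < L%:R -> Ef (Ginv y) = y.
Proof.
move=> /andP[y0 yL].
have [u1 h1] := Ef_low y0; have [u2 h2] := Ef_up yL.
have u12 : u1 <= u2.
  by rewrite -Ef_mono; apply/ltW/(lt_trans h1 h2).
have [c _ hc] : exists2 c, c \in `[u1, u2]%R & Ef c = y.
  apply: IVT => //.
    apply: continuous_subspaceT => z; exact: (Ck_cont (Ef_smooth L 0%N)).
  rewrite ge_min le_max; apply/andP; split; apply/orP; [left|right]; exact: ltW.
rewrite /Ginv; exact: (@xgetPex _ 0 [set v | Ef v = y] (ex_intro _ c hc)).
Qed.

Lemma open_oo (a b : R) : open [set y : R | a < y < b].
Proof.
have -> : [set y : R | a < y < b] = `]a, b[ by apply/seteqP; split => x /=; rewrite in_itv.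
exact: itv_open.
Qed.

Lemma Ginv_smooth : smooth1 [set y | 0 < y < L%:R] Ginv.
Proof.
apply: Ck_inverse.
- exact: open_oo.
- exact: Ef_smooth.
- by move=> x; apply: lt0r_neq0; apply: Ef'_gt0.
- exact: GinvK.
- exact: EfK.
Qed.

Lemma Ginv_incr : {in [set y | 0 < y < L%:R] &, {homo Ginv : x y / x < y}}.
Proof.
move=> x y /set_mem xI /set_mem yI xy.
by rewrite -(EfK xI) -(EfK yI) in xy; rewrite ltNge -Ef_mono -ltNge.
Qed.

Lemma Ef_range u : 0 < Ef u < L%:R.
Proof.
have i1 : (1 < L.+1)%N by [].
have N0 : 0 < Nn u.
  apply: lt_le_trans (@le_sum_term _ _ (fun j : 'I_L.+1 => j%:R * pe j u) (Ordinal i1) _).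
    by rewrite /= mul1r pe_gt0.
  by move=> j; rewrite mulr_ge0 // ltW // pe_gt0.
have D0 := Dn_gt0 L u.
rewrite EfE divr_gt0 //= ltr_pdivrMr //.
rewrite -subr_gt0 /Dn /Nn mulr_sumr -sumrB.
apply: lt_le_trans (@le_sum_term _ _ (fun j : 'I_L.+1 => L%:R * pe j u - j%:R * pe j u) ord0 _).
  by rewrite /= mul0r subr0 mulr_gt0 ?ltr0n // pe_gt0.
move=> j; rewrite -mulrBl mulr_ge0 //; last by rewrite ltW // pe_gt0.
by rewrite subr_ge0 ler_nat -ltnS ltn_ord.
Qed.

End Mom2.
Section Rows.
Context {R : realType} (n : nat).

Lemma coord_der (H : R -> R) (x v : 'rV[R]_n) j : derivable H (x ord0 j) 1 ->
  derivable (fun y : 'rV[R]_n => H (y ord0 j)) x v /\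
  'D_v (fun y : 'rV[R]_n => H (y ord0 j)) x = H^`()%classic (x ord0 j) * v ord0 j.
Proof.
move=> dH.
have @c : {linear 'rV[R]_n -> R^o}.
  by exists (fun N : 'rV[R]_n => N ord0 j); do 2![eexists]; do ?[constructor];
     rewrite ?mxE// => ? *; rewrite ?mxE//; move=> ?; rewrite !mxE.
have cE : forall y, c y = y ord0 j by [].
have -> : (fun y : 'rV[R]_n => H (y ord0 j)) = H \o c by [].
have dc : differentiable c x.
  exact/linear_differentiable/coord_continuous.
have dHc : differentiable H (c x) by rewrite cE; apply/derivable1_diffP.
have dF : differentiable (H \o c) x by apply: differentiable_comp.
split; first exact: diff_derivable.
have dl : 'd c x = c :> ('rV[R]_n -> R).
  by apply: diff_lin; exact: coord_continuous.
rewrite deriveE // diff_comp //= dl diff1E //.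
by rewrite [RHS]mulrC.
Qed.

Lemma row_der (g : 'I_n -> R -> R) (x v : 'rV[R]_n) :
  (forall j, derivable (g j) (x ord0 j) 1) ->
  derivable (fun y : 'rV[R]_n => \row_j g j (y ord0 j)) x v /\
  'D_v (fun y : 'rV[R]_n => \row_j g j (y ord0 j)) x =
    \row_j ((g j)^`()%classic (x ord0 j) * v ord0 j).
Proof.
move=> dg.
have E : forall (i : 'I_1) j, (fun y : 'rV[R]_n => (\row_k g k (y ord0 k)) i j) =
    (fun y => g j (y ord0 j)).
  by move=> i j; apply/funext => y; rewrite mxE.
have dM : derivable (fun y : 'rV[R]_n => \row_j g j (y ord0 j)) x v.
  by apply/derivable_mxP => i j; rewrite E; case: (coord_der v (dg j)).
split => //; rewrite derive_mx //; apply/matrixP => i j; rewrite !mxE E.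
by case: (coord_der v (dg j)).
Qed.

Lemma row_cont (g : 'I_n -> R -> R) (x : 'rV[R]_n) :
  (forall j, {for x ord0 j, continuous (g j)}) ->
  {for x, continuous (fun y : 'rV[R]_n => \row_j g j (y ord0 j))}.
Proof.
move=> cg; have FF : ProperFilter (nbhs x) by apply: nbhs_pfilter.
apply/(cvg_ballP (FF:=FF)) => e e0.
have cj : forall j, \forall y \near x, ball (g j (x ord0 j)) e (g j ((y : 'rV[R]_n) ord0 j)).
  move=> j; have := @continuous_comp _ _ _ (fun y : 'rV[R]_n => y ord0 j) (g j) x
    (@coord_continuous R 1 n ord0 j x) (cg j).
  by move/cvg_ballP => /(_ e e0).
have cj' : \forall y \near x, forall j, ball (g j (x ord0 j)) e (g j ((y : 'rV[R]_n) ord0 j)).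
  exact: (@filter_forall _ _ (fun j (y : 'rV[R]_n) => ball (g j (x ord0 j)) e (g j (y ord0 j))) (nbhs x) FF cj).
by apply: filterS cj' => y Hy; split => // i j; rewrite !mxE; exact: Hy.
Qed.

End Rows.
Section SmoothRows.
Context {R : realType} (n : nat).

Lemma near_open (U : set 'rV[R]_n) x : open U -> U x -> \forall y \near x, U y.
Proof. by move=> oU Ux; apply: oU. Qed.

Lemma smooth_rows (h : 'I_n -> R -> R) (I : 'I_n -> set R) (U : set 'rV[R]_n) :
  open U -> (forall x, U x -> forall j, I j (x ord0 j)) ->
  (forall j, smooth1 (I j) (h j)) ->
  smooth_on U (fun x : 'rV[R]_n => \row_j h j (x ord0 j)).
Proof.
move=> oU UI sh.
pose F := fun x : 'rV[R]_n => \row_j h j (x ord0 j).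
rewrite -/F.
pose G := fun (vs : seq 'rV[R]_n) (y : 'rV[R]_n) =>
  \row_j ((\prod_(v <- vs) v ord0 j) * (h j)^`(size vs)%classic (y ord0 j)).
have derk : forall j k y, I j y -> derivable ((h j)^`(k)%classic) y 1.
  move=> j k y Iy; have := @Ck_dern _ 1 k _ _ (sh j (k + 1)%N).
  by case => + _; apply.
have contk : forall j k y, I j y -> {for y, continuous ((h j)^`(k)%classic)}.
  move=> j k y Iy; have := @Ck_dern _ 0 k _ _ (sh j (k + 0)%N).
  by apply.
have key : forall vs y, U y -> iter_dir vs F y = G vs y.
  elim => [|v vs IH] y Uy /=.
    by apply/matrixP => i j; rewrite /F /G !mxE big_nil mul1r derive1n0.
  have nr : \forall z \near y, iter_dir vs F z = G vs z.
    by apply: filterS (near_open oU Uy) => z Uz; apply: IH.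
  rewrite (near_eq_derive _ nr).
  have := @row_der R n (fun j s => (\prod_(v <- vs) v ord0 j) * (h j)^`(size vs)%classic s) y v.
  case.
    by move=> j; apply: derivableM; [apply: derivable_cst|apply: derk; apply: UI].
  move=> _ ->; apply/matrixP => i j; rewrite /G !mxE big_cons /=.
  have [_ ->] := scal_der (\prod_(v <- vs) v ord0 j) (conj (derk j (size vs) _ (UI _ Uy j)) erefl).
  ring.
split => // vs x Ux.
have nr : \forall z \near x, G vs z = iter_dir vs F z.
  by apply: filterS (near_open oU Ux) => z Uz; rewrite key.
split.
  rewrite /prop_for /continuous_at (key vs x Ux).
  apply: cvg_trans (_ : G vs @ x --> G vs x).
    exact: near_eq_cvg nr.
  apply: (@row_cont R n (fun j s => (\prod_(v <- vs) v ord0 j) * (h j)^`(size vs)%classic s) x) => j.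
  apply: continuousM; first exact: cvg_cst.
  by apply: contk; apply: UI.
move=> v; apply: near_eq_derivable nr _.
have := @row_der R n (fun j s => (\prod_(v <- vs) v ord0 j) * (h j)^`(size vs)%classic s) x v.
case => //.
by move=> j; apply: derivableM; [apply: derivable_cst|apply: derk; apply: UI].
Qed.

End SmoothRows.
Section Poly.
Context {R : realType} (n : nat) (A B : 'I_n -> R).

Definition Qset : set 'rV[R]_n :=
  [set w | (forall j, A j <= w ord0 j <= B j) /\ \sum_j w ord0 j = 0].

Definition inhull (vs : seq 'rV[R]_n) (x : 'rV[R]_n) :=
  exists w : 'I_(size vs) -> R,
    [/\ forall i, 0 <= w i, \sum_i w i = 1 & x = \sum_i w i *: vs`_(val i)].

Lemma inhull_conv vs x y (l : R) : 0 <= l <= 1 ->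
  inhull vs x -> inhull vs y -> inhull vs (l *: x + (1 - l) *: y).
Proof.
move=> /andP[l0 l1] [w [w0 w1 ->]] [w' [w'0 w'1 ->]].
exists (fun i => l * w i + (1 - l) * w' i); split.
- by move=> i; rewrite addr_ge0 // mulr_ge0 // subr_ge0.
- rewrite big_split /= -!mulr_sumr w1 w'1; lra.
- rewrite !scaler_sumr -big_split /=; apply: eq_bigr => i _.
  by rewrite [RHS]scalerDl !scalerA.
Qed.

Lemma inhull_mem vs x : x \in vs -> inhull vs x.
Proof.
move=> xv.
have xk : (index x vs < size vs)%N by rewrite index_mem.
pose kk := Ordinal xk.
exists (fun i => ((i == kk) : nat)%:R); split.
- by move=> i; rewrite ler0n.
- by rewrite (bigD1 kk) //= eqxx big1 ?addr0 // => i /negbTE ->.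
- rewrite (bigD1 kk) //= eqxx big1 ?addr0; last by move=> i /negbTE ->; rewrite scale0r.
  by rewrite scale1r /= nth_index.
Qed.

Definition bnd (b : {ffun 'I_n -> bool}) j := if b j then B j else A j.

Definition cand (p : option 'I_n * {ffun 'I_n -> bool}) : 'rV[R]_n :=
  \row_j (match p.1 with
          | Some i => if j == i then - \sum_(k | k != i) bnd p.2 k else bnd p.2 j
          | None => bnd p.2 j end).

Definition candL : seq 'rV[R]_n :=
  [seq cand p | p <- enum {: option 'I_n * {ffun 'I_n -> bool}} & `[< Qset (cand p) >]].

Definition free (w : 'rV[R]_n) : {set 'I_n} := [set j | A j < w ord0 j < B j].

Lemma notfree (w : 'rV[R]_n) j : A j <= w ord0 j <= B j -> j \notin free w ->
  w ord0 j = (if w ord0 j == B j then B j else A j).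
Proof.
move=> /andP[h1 h2]; rewrite inE => nf; case: eqP => [//|ne].
apply/eqP; rewrite eq_le h1 andbT leNgt; apply/negP => lt; move/negP: nf; apply.
by rewrite lt /= lt_neqAle h2 andbT; apply/eqP.
Qed.

Lemma base w : Qset w -> (#|free w| <= 1)%N -> w \in candL.
Proof.
move=> [wb ws] c1.
pose b := [ffun j => w ord0 j == B j].
have wnf : forall j, j \notin free w -> w ord0 j = bnd b j.
  by move=> j nf; rewrite /bnd ffunE; apply: notfree.
have [p wp] : exists p, w = cand p.
  case: (set_0Vmem (free w)) => [f0|[i fi]].
    exists (None, b); apply/matrixP => r j; rewrite (ord1 r) !mxE /=.
    by apply: wnf; rewrite f0 inE.
  exists (Some i, b); apply/matrixP => r j; rewrite (ord1 r) !mxE /=.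
  have oth : forall k, k != i -> w ord0 k = bnd b k.
    move=> k ki; apply: wnf; apply/negP => fk; move/negP: ki; apply.
    by apply/eqP; apply: (card_le1_eqP c1).
  case: eqP => [->|/eqP ji]; last exact: oth.
  move: ws; rewrite (bigD1 i) //= => /eqP; rewrite addr_eq0 => /eqP ->.
  by congr (- _); apply: eq_bigr => k ki; apply: oth.
apply/mapP; exists p; last exact: wp.
by rewrite mem_filter mem_enum andbT; apply/asboolP; rewrite -wp.
Qed.

Lemma sum_ind (k : 'I_n) : \sum_j ((j == k) : nat)%:R = 1 :> R.
Proof. by rewrite (bigD1 k) //= eqxx big1 ?addr0 // => j /negbTE ->. Qed.

Lemma Q_hull w : Qset w -> inhull candL w.
Proof.
move=> Qw; move: {2}(#|free w|) (leqnn #|free w|) => m.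
elim: m w Qw => [|m IH] w Qw cw.
  by apply: inhull_mem; apply: base => //; apply: leq_trans cw _.
case: (leqP #|free w| 1) => [c1|c2]; first by apply: inhull_mem; apply: base.
have [p [q [fp fq pq]]] := card_gt1P c2.
have fp' := fp; have fq' := fq.
move: fp fq; rewrite !inE => /andP[Ap pB] /andP[Aq qB].
pose d : 'rV[R]_n := delta_mx ord0 p - delta_mx ord0 q.
have dE : forall j, d ord0 j = ((j == p) : nat)%:R - ((j == q) : nat)%:R.
  by move=> j; rewrite !mxE eqxx.
have sd : \sum_j d ord0 j = 0.
  by rewrite (eq_bigr _ (fun j _ => dE j)) sumrB !sum_ind subrr.
have step : forall s, A p <= w ord0 p + s <= B p -> A q <= w ord0 q - s <= B q ->
    Qset (w + s *: d) /\ (free (w + s *: d) \subset free w).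
  move=> s hp hq; have [wb ws] := Qw.
  have cE : forall j, (w + s *: d) ord0 j = w ord0 j + s * d ord0 j.
    by move=> j; rewrite !mxE.
  split; first split.
  - move=> j; rewrite cE dE.
    case: (eqVneq j p) => [->|jp]; first by rewrite (negbTE pq) /= subr0 mulr1.
    case: (eqVneq j q) => [->|jq]; first by rewrite /= sub0r mulrN1.
    by rewrite /= subr0 mulr0 addr0 wb.
  - rewrite (eq_bigr _ (fun j _ => cE j)) big_split /= -mulr_sumr sd mulr0 addr0.
    exact: ws.
  - apply/fintype.subsetP => j; rewrite !inE cE dE.
    case: (eqVneq j p) => [->|jp]; first by rewrite Ap pB.
    case: (eqVneq j q) => [->|jq]; first by rewrite Aq qB.
    by rewrite /= subr0 mulr0 addr0.
pose s1 := Num.min (B p - w ord0 p) (w ord0 q - A q).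
pose s2 := Num.min (w ord0 p - A p) (B q - w ord0 q).
have s1a : s1 <= B p - w ord0 p by rewrite /s1 ge_min lexx.
have s1b : s1 <= w ord0 q - A q by rewrite /s1 ge_min lexx orbT.
have s2a : s2 <= w ord0 p - A p by rewrite /s2 ge_min lexx.
have s2b : s2 <= B q - w ord0 q by rewrite /s2 ge_min lexx orbT.
have s10 : 0 < s1 by rewrite /s1 lt_min !subr_gt0 pB Aq.
have s20 : 0 < s2 by rewrite /s2 lt_min !subr_gt0 Ap qB.
have [Q1 F1] : Qset (w + s1 *: d) /\ (free (w + s1 *: d) \subset free w).
  apply: step; apply/andP; split; lra.
have [Q2 F2] : Qset (w + (- s2) *: d) /\ (free (w + (- s2) *: d) \subset free w).
  apply: step; apply/andP; split; lra.
have cE : forall s j, (w + s *: d) ord0 j = w ord0 j + s * d ord0 j.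
  by move=> s j; rewrite !mxE.
have dp : d ord0 p = 1 by rewrite dE eqxx (negbTE pq) subr0.
have dq : d ord0 q = -1 by rewrite dE eqxx eq_sym (negbTE pq) sub0r.
have smaller : forall s, (free (w + s *: d) \subset free w) ->
    (w + s *: d) ord0 p = B p \/ (w + s *: d) ord0 q = A q \/
    (w + s *: d) ord0 p = A p \/ (w + s *: d) ord0 q = B q ->
    (#|free (w + s *: d)| <= m)%N.
  move=> s sub hx.
  have [x [fx nx]] : exists x, x \in free w /\ x \notin free (w + s *: d).
    case: hx => [h|[h|[h|h]]]; [exists p|exists q|exists p|exists q]; split => //;
      by rewrite inE h ?ltxx ?andbF.
  have : (#|free (w + s *: d)| <= #|free w :\ x|)%N.
    apply: subset_leq_card; apply/fintype.subsetP => j fj; rewrite in_setD1.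
    rewrite (fintype.subsetP sub _ fj) andbT; apply/negP => /eqP jx.
    by move: nx; rewrite -jx fj.
  rewrite (cardsD1 x (free w)) fx add1n in cw.
  by move=> h; apply: leq_trans h _; rewrite -ltnS.
have cc1 : (#|free (w + s1 *: d)| <= m)%N.
  apply: smaller => //; rewrite !cE dp dq.
  case: (leP (B p - w ord0 p) (w ord0 q - A q)) => h.
    by left; rewrite /s1 minEle h mulr1; ring.
  by right; left; rewrite /s1 minEle leNgt h /= mulrN1; ring.
have cc2 : (#|free (w + (- s2) *: d)| <= m)%N.
  apply: smaller => //.
  rewrite !cE dp dq.
  case: (leP (w ord0 p - A p) (B q - w ord0 q)) => h.
    by right; right; left; rewrite /s2 minEle h mulr1; ring.
  by right; right; right; rewrite /s2 minEle leNgt h /= mulrN1; ring.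
have -> : w = (s2 / (s1 + s2)) *: (w + s1 *: d) + (1 - s2 / (s1 + s2)) *: (w + (- s2) *: d).
  apply/matrixP => i j; rewrite !mxE; field; lra.
apply: inhull_conv; last 2 first.
- exact: IH.
- exact: IH.
apply/andP; split; first by rewrite divr_ge0 //; lra.
by rewrite ler_pdivrMr; lra.
Qed.

Lemma Qset_polytope : convex_polytope Qset.
Proof.
exists candL; apply/seteqP; split => x.
  by move=> Qx; apply: Q_hull.
move=> [w [w0 w1 ->]].
have Qi : forall i : 'I_(size candL), Qset candL`_i.
  move=> i; have : candL`_i \in candL by apply: mem_nth.
  by case/mapP => p; rewrite mem_filter => /andP[/asboolP Qp _] ->.
have xE : forall j, (\sum_i w i *: candL`_(val i)) ord0 j = \sum_i w i * candL`_(val i) ord0 j.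
  by move=> j; rewrite summxE; apply: eq_bigr => i _; rewrite mxE.
split.
  move=> j; rewrite xE; apply/andP; split.
    rewrite -[A j]mul1r -w1 mulr_suml; apply: ler_sum => i _.
    by apply: ler_wpM2l => //; case: (Qi i) => /(_ j) /andP[].
  rewrite -[B j]mul1r -w1 mulr_suml; apply: ler_sum => i _.
  by apply: ler_wpM2l => //; case: (Qi i) => /(_ j) /andP[].
rewrite (eq_bigr _ (fun j _ => xE j)) exchange_big /=.
rewrite big1 // => i _; rewrite -mulr_sumr; case: (Qi i) => _ ->; exact: mulr0.
Qed.

End Poly.
Section Gen.
Context {R : realType}.

Lemma cont_sum_at (T : topologicalType) (x : T) m (F : 'I_m -> T -> R) :
  (forall j, {for x, continuous (F j)}) ->
  {for x, continuous (fun t => \sum_(j < m) F j t)}.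
Proof.
elim: m F => [|m IH] F cF.
  have -> : (fun t => \sum_(j < 0) F j t) = fun=> 0.
    by apply/funext => t; rewrite big_ord0.
  exact: cvg_cst.
have -> : (fun t => \sum_(j < m.+1) F j t) =
   (fun t => \sum_(j < m) F (widen_ord (leqnSn m) j) t + F ord_max t).
  by apply/funext => t; rewrite big_ord_recr.
apply: continuousD; last exact: cF.
by apply: IH => j; apply: cF.
Qed.

Lemma closure_in (T U : topologicalType) (S : set T) (C : set U) (h : T -> U) x :
  closed C -> (forall y, S y -> C (h y)) -> {for x, continuous h} ->
  closure S x -> C (h x).
Proof.
move=> cC SC hc Sx; apply: cC => B Bh.
have : nbhs x (h @^-1` B) by apply: hc.
move=> /Sx [y [Sy By]]; exists (h y); split => //; exact: SC.
Qed.

Lemma between_mono (h : R -> R) (D : set R) a b x : D a -> D b -> D x -> a <= b ->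
  (forall u v, D u -> D v -> (h u <= h v) = (u <= v)) \/
  (forall u v, D u -> D v -> (h u <= h v) = (v <= u)) ->
  (a <= x <= b) = (Num.min (h a) (h b) <= h x <= Num.max (h a) (h b)).
Proof.
move=> Da Db Dx ab [inc|dec].
  by rewrite minEle maxEle inc // ab !inc.
rewrite minEle maxEle dec //.
case: (leP b a) => ba.
  have -> : a = b by apply/eqP; rewrite eq_le ab ba.
  by rewrite !dec // andbC.
by rewrite !dec // andbC.
Qed.

Lemma ln_prod (I : Type) (r : seq I) (P : pred I) (F : I -> R) :
  (forall i, 0 < F i) -> ln (\prod_(i <- r | P i) F i) = \sum_(i <- r | P i) ln (F i).
Proof.
move=> F0; elim: r => [|i r IH]; first by rewrite !big_nil ln1.
rewrite !big_cons; case: (P i) => //.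
rewrite lnM ?IH // posrE //; apply: prodr_gt0 => j _; exact: F0.
Qed.

End Gen.

Section OneSide.
Context {R : realType} (L : nat) (L0 : (0 < L)%N) (len c : R) (len0 : 0 < len) (c0 : c != 0).

Definition sc : R := len / L%:R.
Definition phi1 (t : R) : R := c * Ginv L (t / sc).
Definition theta1 (w : R) : R := sc * Ef L (w / c).

Lemma sc_gt0 : 0 < sc. Proof. by rewrite divr_gt0 // ltr0n. Qed.
Lemma scL : sc * L%:R = len.
Proof. by rewrite /sc divfK // pnatr_eq0 -lt0n. Qed.

Lemma dom_ok t : 0 < t < len -> 0 < t / sc < L%:R.
Proof.
move=> /andP[t0 tl]; rewrite divr_gt0 ?sc_gt0 //= ltr_pdivrMr ?sc_gt0 //.
by rewrite mulrC scL.
Qed.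

Lemma theta1K t : 0 < t < len -> theta1 (phi1 t) = t.
Proof.
move=> ht; rewrite /theta1 /phi1 [c * _]mulrC mulfK // EfK ?dom_ok //.
by rewrite mulrC divfK // lt0r_neq0 // sc_gt0.
Qed.

Lemma phi1K w : phi1 (theta1 w) = w.
Proof.
rewrite /theta1 /phi1 [sc * _]mulrC mulfK ?lt0r_neq0 ?sc_gt0 // GinvK //.
by rewrite mulrC divfK.
Qed.

Lemma theta1_range w : 0 < theta1 w < len.
Proof.
have /andP[h1 h2] := Ef_range L0 (w / c).
rewrite /theta1 mulr_gt0 ?sc_gt0 //= -scL ltr_pM2l ?sc_gt0 //.
Qed.

Lemma phi1_mono :
  (forall u v, 0 < u < len -> 0 < v < len -> (phi1 u <= phi1 v) = (u <= v)) \/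
  (forall u v, 0 < u < len -> 0 < v < len -> (phi1 u <= phi1 v) = (v <= u)).
Proof.
have G : forall u v, 0 < u < len -> 0 < v < len ->
    (Ginv L (u / sc) <= Ginv L (v / sc)) = (u <= v).
  move=> u v hu hv.
  have Hu := dom_ok hu; have Hv := dom_ok hv.
  rewrite (le_mono_in (@Ginv_incr R L L0)); first by rewrite ler_pM2r // invr_gt0 sc_gt0.
    by rewrite inE; exact: Hu.
  by rewrite inE; exact: Hv.
case: (ltrgt0P c) => [cp|cn|ce]; last by move: c0; rewrite ce eqxx.
  by left => u v hu hv; rewrite ler_pM2l // G.
by right => u v hu hv; rewrite ler_nM2l // G.
Qed.

Lemma phi1_smooth : smooth1 [set t | 0 < t < len] phi1.
Proof.
move=> k; rewrite /phi1; apply: Ck_mul (@open_oo R _ _) (Ck_cst _ _ _) _.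
apply: (Ck_comp (@open_oo R _ _) (@open_oo R _ _) _ (Ginv_smooth L0 k)).
  by move=> x hx; apply: dom_ok.
exact: Ck_mul (@open_oo R _ _) (Ck_id _ _) (Ck_cst _ _ _).
Qed.

Lemma theta1_smooth : smooth1 setT theta1.
Proof.
move=> k; rewrite /theta1; apply: Ck_mul openT (Ck_cst _ _ _) _.
apply: (Ck_comp openT openT (fun _ _ => I) (Ef_smooth L k)).
exact: Ck_mul openT (Ck_id _ _) (Ck_cst _ _ _).
Qed.

End OneSide.
Section Delta.
Context {R : realType} (n : nat) (a : 'I_n -> zvec).

Lemma latlen_gt0 (v : zvec) : v != (0, 0) -> (0 < latlen v)%N.
Proof.
case: v => x y; rewrite /latlen gcdn_gt0 !absz_gt0 /= xpair_eqE negb_and.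
by [].
Qed.

Lemma zdot_gt0 (v : zvec) : v != (0, 0) -> (0 < zdot v v)%R.
Proof.
case: v => x y; rewrite xpair_eqE negb_and /zdot /= -!expr2 => nz.
rewrite lt_def addr_ge0 ?sqr_ge0 // andbT paddr_eq0 ?sqr_ge0 //.
by rewrite !sqrf_eq0 negb_and.
Qed.

Lemma same_dir_refl (v : zvec) : v != (0, 0) -> same_dir v v.
Proof.
move=> nz; rewrite /same_dir /zdet mulrC subrr eqxx /=; exact: zdot_gt0.
Qed.

Hypothesis a0 : forall i, a i != (0, 0).
Hypothesis ev : even_family a.

Lemma side_latlen_gt0 j : (0 < side_latlen a j)%N.
Proof.
rewrite /side_latlen (bigD1 j) ?same_dir_refl //=.
exact: leq_trans (latlen_gt0 (a0 j)) (leq_addr _ _).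
Qed.

Lemma side_len_gt0 j : 0 < side_len R a j.
Proof.
rewrite /side_len (bigD1 j) ?same_dir_refl //=.
apply: ltr_wpDr; first by apply: sumr_ge0 => i _; apply: sqrtr_ge0.
rewrite sqrtr_gt0 ltr0z; have := zdot_gt0 (a0 j).
by rewrite /zdot -!expr2.
Qed.

Lemma kk_gt0 j : (0 < kk a j)%N.
Proof.
rewrite /kk divn_gt0 //; apply: dvdn_leq; first exact: latlen_gt0.
have [e1 e2] := ev j; move: e1 e2; rewrite !dvdzE /= => e1 e2.
by rewrite /latlen dvdn_gcd e1 e2.
Qed.

Lemma m_gt0 j : (0 < kk a j %/ k0 a)%N.
Proof.
have dv : (k0 a %| kk a j)%N by rewrite /k0 (bigD1 j) //= dvdn_gcdl.
have k00 : (0 < k0 a)%N.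
  rewrite lt0n; apply/negP => /eqP e; move: dv; rewrite e dvd0n => /eqP.
  by move=> h; have := kk_gt0 j; rewrite h.
by rewrite divn_gt0 // dvdn_leq // kk_gt0.
Qed.

End Delta.

Unset Implicit Arguments.
Set Strict Implicit.

Theorem lemma2p3 (R : realType) (n : nat) (a : 'I_n -> zvec)
  (l1 l2 : R) (rho : R) :
  (forall i, a i != (0, 0)) ->
  balanced_family a -> nondegenerate_family a -> even_family a ->
  (forall p q : int, l1 * p%:~R + l2 * q%:~R = 0 -> p = 0 /\ q = 0) ->
  0 < rho ->
  (forall j, exists t : R,
      [/\ 0 <= t, t <= side_len R a j, rho <= t & rho <= side_len R a j - t]) ->
  exists (m : nat) (Q : set 'rV[R]_m),
    convex_polytope Q /\ diffeomorphic (closure (Men_rho l1 l2 a rho)) Q.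
Proof.
move=> a0 _ _ ev _ rho0 hside.
pose L j := side_latlen a j.
have L0 : forall j, (0 < L j)%N by move=> j; exact: side_latlen_gt0.
pose len j := side_len R a j.
have len0 : forall j, 0 < len j by move=> j; exact: side_len_gt0.
pose m j := (kk a j %/ k0 a)%N.
pose e j : R := (m j)%:R.
have e0 : forall j, 0 < e j by move=> j; rewrite ltr0n; exact: m_gt0.
pose c j := if in_B' l1 l2 a j then e j else - e j.
have c0 : forall j, c j != 0.
  by move=> j; rewrite /c; case: ifP => _; rewrite ?oppr_eq0 lt0r_neq0.
pose phi j := phi1 (L j) (len j) (c j).
pose theta j := theta1 (L j) (len j) (c j).
pose s j := sc (L j) (len j).
have rr : forall j, rho <= len j - rho.
  by move=> j; have [t [_ _ h1 h2]] := hside j; rewrite /len; lra.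
have dom : forall j x, rho <= x <= len j - rho -> 0 < x < len j.
  move=> j x /andP[h1 h2]; apply/andP; split; lra.
pose A j := Num.min (phi j rho) (phi j (len j - rho)).
pose B j := Num.max (phi j rho) (phi j (len j - rho)).
have boxE : forall j x, 0 < x < len j ->
    (rho <= x <= len j - rho) = (A j <= phi j x <= B j).
  move=> j x hx.
  apply: (@between_mono _ (phi j) [set y | 0 < y < len j] rho (len j - rho) x).
  - by apply: dom; rewrite lexx rr.
  - by apply: dom; rewrite lexx rr.
  - exact: hx.
  - exact: rr.
  - exact: phi1_mono.
have split_sum : forall F : 'I_n -> R,
    \sum_j (c j * F j) = \sum_(j | in_B' l1 l2 a j) e j * F j
                         - \sum_(j | ~~ in_B' l1 l2 a j) e j * F j.
  move=> F; rewrite (bigID (fun j => in_B' l1 l2 a j)) /=; congr (_ + _).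
    by apply: eq_bigr => j; rewrite /c => ->.
  by rewrite -sumrN; apply: eq_bigr => j /negbTE; rewrite /c => ->; rewrite mulNr.
have MenE : forall t, Men_rho l1 l2 a rho t <->
    (forall j, rho <= t ord0 j <= len j - rho) /\ \sum_j phi j (t ord0 j) = 0.
  move=> t; split.
    move=> [xi [xi0 peq tE tb]].
    have bx : forall j, rho <= t ord0 j <= len j - rho.
      by move=> j; have [h1 h2] := tb j; apply/andP; split; rewrite /len; lra.
    split => //.
    have phE : forall j, phi j (t ord0 j) = c j * ln (xi j).
      move=> j; rewrite tE /pos_on_side /phi /phi1; congr (_ * _).
      have -> : mom (side_latlen a j) (xi j) = Ef (L j) (ln (xi j)).
        by rewrite /Ef lnK // posrE.
      rewrite -/(sc (L j) (len j)) [sc _ _ * _]mulrC mulfK ?GinvK //.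
      by apply: lt0r_neq0; apply: sc_gt0.
    rewrite (eq_bigr _ (fun j _ => phE j)) split_sum.
    have := congr1 (@ln R) peq; rewrite !ln_prod; last 2 first.
    - by move=> j; rewrite exprn_gt0.
    - by move=> j; rewrite exprn_gt0.
    move=> h; apply/eqP; rewrite subr_eq0; apply/eqP.
    rewrite (eq_bigr (fun j => ln (xi j ^+ m j))); last by move=> j _; rewrite lnXn // mulr_natl.
    rewrite h; apply: eq_bigr => j _; by rewrite lnXn // mulr_natl.
  move=> [bx sm].
  have t0 : forall j, 0 < t ord0 j < len j by move=> j; apply: dom.
  pose g j := Ginv (L j) (t ord0 j / s j).
  exists (fun j => expR (g j)); split.
  - by move=> j; apply: expR_gt0.
  - rewrite -!(eq_bigr _ (fun j _ => expRM_natl _ _)) -!expR_sum; congr expR.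
    move: sm; rewrite (eq_bigr (fun j => c j * g j)) // split_sum.
    by move/eqP; rewrite subr_eq0 => /eqP.
  - move=> j; rewrite /pos_on_side -/(sc (L j) (len j)) -/(s j).
    have -> : mom (side_latlen a j) (expR (g j)) = Ef (L j) (g j) by [].
    rewrite /g EfK //; last exact: dom_ok.
    by rewrite mulrC divfK // lt0r_neq0 // sc_gt0.
  - by move=> j; have /andP[h1 h2] := bx j; split; rewrite /len in h1 h2 *; lra.
have clos : closure (Men_rho l1 l2 a rho) = Men_rho l1 l2 a rho.
  apply/seteqP; split; last exact: subset_closure.
  move=> t ct.
  have bx : forall j, rho <= t ord0 j <= len j - rho.
    move=> j.
    have := @closure_in _ _ (Men_rho l1 l2 a rho) [set x : R | rho <= x <= len j - rho]
      (fun y : 'rV[R]_n => y ord0 j) t _ _ (@coord_continuous R 1 n ord0 j t) ct.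
    apply.
    - have -> : [set x : R | rho <= x <= len j - rho] =
                [set x | rho <= x] `&` [set x | x <= len j - rho].
        by apply/seteqP; split => x /= => [/andP[]|[-> ->]].
      by apply: closedI; [apply: closed_ge|apply: closed_le].
    - by move=> y /MenE [+ _]; apply.
  apply/MenE; split => //.
  have := @closure_in _ _ (Men_rho l1 l2 a rho) [set x : R | x = 0]
    (fun y : 'rV[R]_n => \sum_j phi j (y ord0 j)) t _ _ _ ct.
  apply.
  - exact: closed_eq.
  - by move=> y /MenE [].
  - apply: cont_sum_at => j.
    apply: continuous_comp; first exact: coord_continuous.
    have := phi1_smooth (L0 j) (c j) (len0 j) 0%N.
    by move=> /= /(_ (t ord0 j)); apply; apply: dom.
rewrite clos.
exists n, (Qset A B); split; first exact: Qset_polytope.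
exists (fun t : 'rV[R]_n => \row_j phi j (t ord0 j)).
exists (fun w : 'rV[R]_n => \row_j theta j (w ord0 j)).
split.
- move=> t /MenE [bx sm]; split.
    by move=> j; rewrite mxE -boxE ?bx //; apply: dom.
  rewrite (eq_bigr (fun j => phi j (t ord0 j))); first exact: sm.
  by move=> j _; rewrite mxE.
- move=> w [wb ws]; apply/MenE.
  have th0 : forall j, 0 < theta j (w ord0 j) < len j.
    by move=> j; apply: theta1_range.
  have ph : forall j, phi j (theta j (w ord0 j)) = w ord0 j.
    by move=> j; apply: phi1K.
  split.
    by move=> j; rewrite mxE boxE ?ph ?wb.
  rewrite (eq_bigr (fun j => w ord0 j)); first exact: ws.
  by move=> j _; rewrite mxE ph.
- move=> t /MenE [bx _]; apply/matrixP => i j; rewrite (ord1 i) !mxE.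
  by apply: theta1K => //; apply: dom; apply: bx.
- move=> w _; apply/matrixP => i j; rewrite (ord1 i) !mxE.
  exact: phi1K.
split.
- move=> x /MenE [bx _].
  exists (ball x (rho / 2)), (fun t : 'rV[R]_n => \row_j phi j (t ord0 j)).
  split; first by apply: ballxx; rewrite divr_gt0.
  split => //.
  apply: (@smooth_rows R n _ (fun j => [set y | 0 < y < len j])).
  + exact: ball_open.
  + move=> y [_ /(_ ord0)] yb j; have := yb j.
    rewrite -ball_normE /ball_ /= => h.
    have /andP[h1 h2] := bx j.
    move: h; rewrite ltr_norml => /andP[h3 h4]; apply/andP; split; lra.
  + by move=> j; apply: phi1_smooth.
- move=> y _; exists setT, (fun w : 'rV[R]_n => \row_j theta j (w ord0 j)).
  split => //; split => //.
  apply: (@smooth_rows R n _ (fun j => setT)).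
  + exact: openT.
  + by [].
  + by move=> j; apply: theta1_smooth.
Qed.
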